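(* The ordinal space $\omega_1+1$ (with the order topology) is not self-selective; that is, there is a lower semicontinuous map $\varphi$ from $\omega_1+1$ to the nonempty closed subsets of $\omega_1+1$ that has no continuous selection.
   Context: For spaces $Y$, $X$, a map $\varphi:Y\to\mathcal P(X)\setminus\{\emptyset\}$ is lower semicontinuous if $\{y:\varphi(y)\cap U\neq\emptyset\}$ is open in $Y$ for every open $U\subseteq X$; a selection is a map $f:Y\to X$ with $f(y)\in\varphi(y)$ for all $y$. A space $X$ is self-selective if every lower semicontinuous map from $X$ to the nonempty closed subsets of $X$ has a continuous selection. *)

(* Defs.v *)
From HB Require Import structures.
From mathcomp Require Import all_boot all_order all_algebra.
From mathcomp Require Import all_classical all_reals all_analysis.
Set Implicit Arguments. Unset Strict Implicit. Unset Printing Implicit Defensive.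
Import Order.TTheory.
Local Open Scope classical_set_scope.

Definition lower_semicontinuous (Y X : topologicalType) (phi : Y -> set X) : Prop :=
  forall U : set X, open U -> open [set y | phi y `&` U !=set0].

Definition is_selection (Y X : Type) (phi : Y -> set X) (f : Y -> X) : Prop :=
  forall y, phi y (f y).

Definition self_selective (X : topologicalType) : Prop :=
  forall phi : X -> set X,
    (forall x, phi x !=set0 /\ closed (phi x)) ->
    lower_semicontinuous phi ->
    exists f : X -> X, continuous f /\ is_selection phi f.

Definition is_omega1_plus_1 (d : Order.disp_t) (T : orderType d) : Prop :=
  (forall A : set T, A !=set0 -> exists2 m, A m & forall x, A x -> (m <= x)%O) /\
  exists top : T,
    (forall x, (x <= top)%O) /\
    ~ countable [set x | (x < top)%O] /\
    (forall y, (y < top)%O -> countable [set x | (x < y)%O]).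

(* Main.v *)
Require Import Defs.
From HB Require Import structures.
From mathcomp Require Import all_boot all_order all_algebra.
From mathcomp Require Import all_classical all_reals all_analysis.
Set Implicit Arguments. Unset Strict Implicit. Unset Printing Implicit Defensive.
Import Order.TTheory.

Section Main.
Local Open Scope order_scope.
Local Open Scope classical_set_scope.
Context (d : Order.disp_t) (T : orderTopologicalType d) (top : T).
Hypothesis wo : forall A : set T, A !=set0 -> exists2 m, A m & forall x, A x -> m <= x.
Hypothesis topmax : forall x, x <= top.
Hypothesis unc : ~ countable [set x | x < top].
Hypothesis cnt : forall y, y < top -> countable [set x | x < y].

Definition minT (A : set T) : T := xget top [set m | A m /\ forall x, A x -> m <= x].

Lemma minTP A : A !=set0 -> A (minT A) /\ forall x, A x -> minT A <= x.
Proof. by move=> /wo [m Am mle]; apply: (@xgetPex _ top [set m | A m /\ forall x, A x -> m <= x]); exists m. Qed.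

Lemma countableU2 (A B : set T) : countable A -> countable B -> countable (A `|` B).
Proof.
move=> cA cB.
have -> : A `|` B = \bigcup_(i in [set: bool]) (if i then A else B).
  apply/seteqP; split => x.
    by case=> ?; [exists true | exists false].
  by case=> -[] _ ?; [left|right].
by apply: bigcup_countable => // -[].
Qed.

Definition lim (y : T) : Prop :=
  (exists a, a < y) /\ forall a, a < y -> exists z, a < z /\ z < y.

Lemma top_lim : lim top.
Proof.
split.
  apply: contrapT => H; apply: unc.
  apply: (sub_countable (B := @set0 T)) => //; apply: subset_card_le => x /= xt.
  by apply: H; exists x.
move=> a aT; apply: contrapT => H; apply: unc.
apply: (sub_countable (B := [set x | x < a] `|` [set a])); last first.
  by apply: countableU2 => //; apply: cnt.
apply: subset_card_le => x /= xt.
have [xa|ax] := leP x a.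
  by move: xa; rewrite le_eqVlt => /orP[/eqP ->|]; [right|left].
by exfalso; apply: H; exists x.
Qed.


Lemma open_lt (b : T) : open [set z : T | z < b].
Proof.
have -> : [set z : T | z < b] = `]-oo, b[ by apply/seteqP; split => z; rewrite /= in_itv.
exact: lray_open.
Qed.

Lemma open_gt (b : T) : open [set z : T | b < z].
Proof.
have -> : [set z : T | b < z] = `]b, +oo[ by apply/seteqP; split => z; rewrite /= in_itv /= andbT.
exact: rray_open.
Qed.

Definition succ (x : T) := minT [set z | x < z].

Lemma succP x : x < top -> x < succ x /\ forall z, x < z -> succ x <= z.
Proof. by move=> xt; apply: minTP; exists top. Qed.

Lemma open_le (y : T) : open [set z : T | z <= y].
Proof.
have [yt|] := ltP y top; last first.
  move=> ty; have -> : [set z : T | z <= y] = setT.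
    by apply/seteqP; split => z //= _; apply: (le_trans (topmax z)).
  exact: openT.
have [ys ysm] := succP yt.
have -> : [set z : T | z <= y] = [set z | z < succ y].
  apply/seteqP; split => z /=.
    by move=> zy; apply: le_lt_trans ys.
  by move=> zs; rewrite leNgt; apply/negP => /ysm; rewrite leNgt zs.
exact: open_lt.
Qed.

Lemma open_oc (b y : T) : open [set z : T | b < z /\ z <= y].
Proof.
have -> : [set z : T | b < z /\ z <= y] = [set z | b < z] `&` [set z | z <= y] by [].
by apply: openI; [apply: open_gt | apply: open_le].
Qed.

Lemma open_of_local (V : set T) :
  (forall y, V y -> exists W, [/\ open W, W y & W `<=` V]) -> open V.
Proof.
move=> H; rewrite openE => y Vy; have [W [oW Wy WV]] := H y Vy.
rewrite /interior; apply: (filterS WV); apply: open_nbhs_nbhs; split => //.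
Qed.

Lemma nbhs_left (x : T) (U : set T) a0 : nbhs x U -> a0 < x ->
  exists a, a < x /\ forall z, a < z -> z <= x -> U z.
Proof.
rewrite itv_nbhsE => -[[l r] [oi xi] iU] a0x.
move: oi xi iU; case: l => [[] t|[]]; case: r => [[] u|[]] //= _.
- rewrite in_itv /= => /andP[tx xu] iU; exists t; split => // z tz zx; apply: iU.
  by rewrite /= in_itv /= tz /= (le_lt_trans zx xu).
- rewrite in_itv /= andbT => tx iU; exists t; split => // z tz zx; apply: iU.
  by rewrite /= in_itv /= tz.
- rewrite in_itv /= => xu iU; exists a0; split => // z _ zx; apply: iU.
  by rewrite /= in_itv /= (le_lt_trans zx xu).
- move=> _ iU; exists a0; split => // z _ zx; apply: iU.
  by rewrite /= in_itv.
Qed.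

Lemma closed1 (x : T) : closed [set x].
Proof. by apply: accessible_closed_set1; apply: hausdorff_accessible; apply: order_hausdorff. Qed.

Lemma sup_seq (s : nat -> T) : (forall n, s n < s n.+1) -> (forall n, s n < top) ->
  exists l, [/\ l < top, lim l, (forall n, s n < l) & (forall z, z < l -> exists n, z < s n)].
Proof.
move=> sinc stop.
pose l := minT [set u | forall n, s n <= u].
have [lub lmin] : (forall n, s n <= l) /\ (forall u, (forall n, s n <= u) -> l <= u).
  by apply: minTP; exists top => n; apply: topmax.
have below : forall z, z < l -> exists n, z < s n.
  move=> z zl; apply: contrapT => H; move: zl; rewrite ltNge => /negP; apply; apply: lmin => n.
  by rewrite leNgt; apply/negP => zs; apply: H; exists n.
have sl : forall n, s n < l by move=> n; apply: lt_le_trans (sinc n) (lub n.+1).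
exists l; split => //.
- rewrite lt_neqAle topmax andbT; apply/negP => /eqP lt; apply: unc.
  apply: (sub_countable (B := \bigcup_(n in [set: nat]) [set x | x < s n])); last first.
    by apply: bigcup_countable => // n _; apply: cnt.
  apply: subset_card_le => x /= xt; rewrite -lt in xt.
  by have [n xn] := below x xt; exists n.
- split; first by exists (s 0).
  move=> a al; have [n an] := below a al; exists (s n); split => //.
Qed.

Definition nx (u : T) := xget top [set z | u < z /\ z < top].

Lemma nxP u : u < top -> u < nx u /\ nx u < top.
Proof.
move=> ut; apply: (@xgetPex _ top [set z | u < z /\ z < top]).
by have [_ H] := top_lim; apply: H.
Qed.

Lemma exists_lim_above x : x < top -> exists mu, [/\ x < mu, mu < top & lim mu].
Proof.
move=> xt; pose s n := iter n.+1 nx x.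
have st : forall n, s n < top.
  elim=> [|n IH]; first by rewrite /s /=; case: (nxP xt).
  by rewrite /s iterS; case: (nxP IH).
have sinc : forall n, s n < s n.+1 by move=> n; rewrite /s iterS; case: (nxP (st n)).
have [l [lt ll sl _]] := sup_seq sinc st.
exists l; split => //; apply: lt_trans (sl 0); rewrite /s /=; by case: (nxP xt).
Qed.

Definition code (A : set T) : T -> nat :=
  match pselect (exists f : T -> nat, forall x y, A x -> A y -> f x = f y -> x = y) with
  | left h => proj1_sig (cid h) | right _ => fun _ => 0%N end.

Lemma codeP A : countable A -> forall x y, A x -> A y -> code A x = code A y -> x = y.
Proof.
move=> /countable_injP [f finj]; rewrite /code; case: pselect => [h|nh].
  by case: (cid h) => g /= gi.
exfalso; apply: nh; exists f => x y Ax Ay; apply: finj; rewrite inE //.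
Qed.

Definition S (y : T) : set T :=
  [set z | lim z /\ z <= y /\ forall w, z < w -> w < y -> ~ lim w].
Definition sigma y := minT (S y).

Lemma sigmaP y : S y !=set0 -> S y (sigma y) /\ forall z, S y z -> sigma y <= z.
Proof. exact: minTP. Qed.

Lemma sigma_eq l z : lim l -> l < z -> (forall w, l < w -> w < z -> ~ lim w) -> sigma z = l.
Proof.
move=> ll lz H.
have Szl : S z l by split => //; split => //; apply: ltW.
have [[sl [sz sH]] smin] := sigmaP (ex_intro _ l Szl).
apply/eqP; rewrite eq_le smin //= leNgt; apply/negP => sll.
by apply: (sH l) => //.
Qed.

Definition nu l := minT [set z | l < z /\ lim z].

Lemma nuP l : l < top ->
  [/\ l < nu l, lim (nu l), nu l < top & forall w, l < w -> w < nu l -> ~ lim w].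
Proof.
move=> lt; have [mu [lmu mut lmu']] := exists_lim_above lt.
have [[ln lnu] nmin] := minTP (A := [set z | l < z /\ lim z]) (ex_intro _ mu (conj lmu lmu')).
split => //.
  by apply: le_lt_trans (nmin mu (conj lmu lmu')) mut.
move=> w lw wn lw'; have := nmin w (conj lw lw'); rewrite leNgt.
by rewrite -/(nu l) wn.
Qed.

Lemma nu_eq l y : lim y -> l < y -> (forall w, l < w -> w < y -> ~ lim w) -> nu l = y.
Proof.
move=> ly lty H.
have [[ln lnu] nmin] := minTP (A := [set z | l < z /\ lim z]) (ex_intro _ y (conj lty ly)).
apply/eqP; rewrite eq_le nmin //= leNgt; apply/negP => ny.
by apply: (H (nu l)).
Qed.

Definition cl l := code [set z | z < nu l].

Lemma clP l : l < top -> forall x y, x < nu l -> y < nu l -> cl l x = cl l y -> x = y.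
Proof. by move=> lt; apply: codeP; apply: cnt; case: (nuP lt). Qed.

Definition PP l M := xget l [set p | p < l /\ forall z, z < l -> (cl l z < M)%N -> z <= p].

Lemma PPP l M : lim l -> l < top ->
  PP l M < l /\ forall z, z < l -> (cl l z < M)%N -> z <= PP l M.
Proof.
move=> ll lt; apply: (@xgetPex _ l [set p | p < l /\ forall z, z < l -> (cl l z < M)%N -> z <= p]).
have [ln _ _ _] := nuP lt.
elim: M => [|M [p [pl pH]]].
  by case: ll => [[a al] _]; exists a; split => // z _; rewrite ltn0.
case: (pselect (exists z, z < l /\ cl l z = M)) => [[z0 [z0l cz0]]|nz].
  have [pz|zp] := leP p z0.
    exists z0; split => // z zl; rewrite ltnS leq_eqVlt => /orP[/eqP czM|czM].
      have -> : z = z0 by apply: (clP lt) => //; [apply: lt_trans ln|apply: lt_trans ln|rewrite czM].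
      by [].
    by apply: le_trans (pH z zl czM) pz.
  exists p; split => // z zl; rewrite ltnS leq_eqVlt => /orP[/eqP czM|czM].
    have -> : z = z0 by apply: (clP lt) => //; [apply: lt_trans ln|apply: lt_trans ln|rewrite czM].
    exact: ltW.
  exact: pH.
exists p; split => // z zl; rewrite ltnS leq_eqVlt => /orP[/eqP czM|czM].
  by exfalso; apply: nz; exists z.
exact: pH.
Qed.

Definition q w := PP (sigma w) (cl (sigma w) w).+1.

Definition phi (y : T) : set T :=
  if y == top then [set top]
  else if `[< lim y >] then [set sigma y]
  else if `[< S y !=set0 >] then [set y] `|` [set z | z <= q y]
  else [set y].

Lemma phi_top : phi top = [set top].
Proof. by rewrite /phi eqxx. Qed.

Lemma phi_lim y : y != top -> lim y -> phi y = [set sigma y].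
Proof. by move=> yt ly; rewrite /phi (negbTE yt) asboolT. Qed.

Lemma notlim_top y : ~ lim y -> y != top.
Proof. by move=> ly; apply/eqP => yt; apply: ly; rewrite yt; apply: top_lim. Qed.

Lemma phi_iso y : ~ lim y -> phi y y.
Proof.
move=> ly; rewrite /phi (negbTE (notlim_top ly)) asboolF //.
by case: ifP => _; [left|].
Qed.

Lemma phi_block w : ~ lim w -> S w !=set0 -> phi w = [set w] `|` [set z | z <= q w].
Proof. by move=> lw Sw; rewrite /phi (negbTE (notlim_top lw)) asboolF // asboolT. Qed.

Lemma closed_le (b : T) : closed [set z | z <= b].
Proof.
have -> : [set z | z <= b] = `]-oo, b] by apply/seteqP; split => z; rewrite /= in_itv.
exact: lray_closed.
Qed.

Lemma phi_closed y : closed (phi y).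
Proof.
rewrite /phi; case: ifP => _; first exact: closed1.
case: ifP => _; first exact: closed1.
case: ifP => _; last exact: closed1.
by apply: closedU; [apply: closed1|apply: closed_le].
Qed.

Lemma phi_ne y : phi y !=set0.
Proof.
have [ly|ly] := pselect (lim y); last by exists y; apply: phi_iso.
have [yt|yt] := eqVneq y top; first by exists top; rewrite yt phi_top.
by exists (sigma y); rewrite phi_lim.
Qed.

Lemma iso_open y : ~ lim y -> open [set y].
Proof.
move=> ly.
case: (pselect (exists a, a < y)) => [[a0 a0y]|na].
  have [a [ay H]] : exists a, a < y /\ forall z, ~ (a < z /\ z < y).
    apply: contrapT => H'; apply: ly; split; first by exists a0.
    move=> a ay; apply: contrapT => Hz; apply: H'; exists a; split => // z [az zy].
    by apply: Hz; exists z.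
  have -> : [set y] = [set z | a < z /\ z <= y].
    apply/seteqP; split => z /=; first by move=> ->; split.
    move=> [az]; rewrite le_eqVlt => /orP[/eqP -> //|zy].
    by exfalso; apply: (H z).
  exact: open_oc.
have -> : [set y] = [set z | z <= y].
  apply/seteqP; split => z /=; first by move=> ->.
  rewrite le_eqVlt => /orP[/eqP -> //|zy].
  by exfalso; apply: na; exists z.
exact: open_le.
Qed.

Lemma lsc_self (U : set T) y : open U -> U y -> lim y -> (y = top \/ sigma y = y) ->
  exists W, [/\ open W, W y & W `<=` [set y | phi y `&` U !=set0]].
Proof.
move=> oU Uy ly hy.
have [[a0 a0y] _] := ly.
have [a [ay aU]] := nbhs_left (open_nbhs_nbhs (conj oU Uy)) a0y.
have [b [ab bY bH]] : exists b, [/\ a <= b, b < y &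
    forall w, b < w -> w < y -> lim w -> a < sigma w].
  case: (pselect (exists a', [/\ a < a', a' < y & lim a'])) => [[a' [aa' a'y la']]|na].
    exists a'; split => //; first exact: ltW.
    move=> w a'w wy lw.
    have Sww : S w w by split => //; split => // v wv vw; move: (lt_trans wv vw); rewrite ltxx.
    have [[_ [_ sH]] _] := sigmaP (ex_intro _ w Sww).
    apply: lt_le_trans aa' _; rewrite leNgt; apply/negP => sa'.
    exact: (sH a' sa' a'w la').
  exists a; split => // w aw wy lw; exfalso; apply: na; exists w; split => //.
exists [set z | b < z /\ z <= y]; split; [exact: open_oc| by split |].
move=> z [bz zy] /=.
have az : a < z := le_lt_trans ab bz.
case: (eqVneq z top) => [zt|zt].
  have yt : y = top by apply/eqP; rewrite eq_le topmax -zt zy.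
  by rewrite zt phi_top; exists top; split => //; rewrite -yt.
case: (pselect (lim z)) => lz; last by exists z; split; [apply: phi_iso | apply: aU].
rewrite phi_lim //; exists (sigma z); split => //.
case: (eqVneq z y) => [zy'|zy'].
  subst z; case: hy => [yt'|->] //.
  by rewrite yt' eqxx in zt.
have zlt : z < y by rewrite lt_neqAle zy' zy.
have Szz : S z z by split => //; split => // v wv vw; move: (lt_trans wv vw); rewrite ltxx.
have [[_ [sz _]] _] := sigmaP (ex_intro _ z Szz).
apply: aU; first exact: bH.
exact: le_trans sz zy.
Qed.

Lemma lsc_block (U : set T) y : open U -> lim y -> y != top -> sigma y < y -> U (sigma y) ->
  exists W, [/\ open W, W y & W `<=` [set y | phi y `&` U !=set0]].
Proof.
move=> oU ly yt lty Ul.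
have Syy : S y y by split => //; split => // v wv vw; move: (lt_trans wv vw); rewrite ltxx.
have [[ll [_ lH]] _] := sigmaP (ex_intro _ y Syy).
set l := sigma y in lty Ul ll lH *.
have lt : l < top := lt_le_trans lty (topmax y).
have nul : nu l = y := nu_eq ly lty lH.
have [[a0 a0l] lH2] := ll.
have [a [al aU]] := nbhs_left (open_nbhs_nbhs (conj oU Ul)) a0l.
have [z0 [az0 z0l]] := lH2 a al.
have blk : forall k, exists b, [/\ l <= b, b < y & forall w, b < w -> w < y -> (k <= cl l w)%N].
  elim=> [|k [b [lb bY bH]]]; first by exists l; split.
  case: (pselect (exists w0, [/\ b < w0, w0 < y & cl l w0 = k])) => [[w0 [bw0 w0y cw0]]|nw].
    exists w0; split => //; first exact: le_trans lb (ltW bw0).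
    move=> w w0w wy; have kw := bH w (lt_trans bw0 w0w) wy.
    rewrite ltn_neqAle kw andbT; apply/eqP => kcw.
    have ww0 : w = w0 by apply: (clP lt); rewrite ?nul // -kcw cw0.
    by move: w0w; rewrite ww0 ltxx.
  exists b; split => // w bw wy; have kw := bH w bw wy.
  rewrite ltn_neqAle kw andbT; apply/eqP => kcw.
  by apply: nw; exists w; split.
have [b [lb bY bH]] := blk (cl l z0).
exists [set z | b < z /\ z <= y]; split; [exact: open_oc| by split |].
move=> z [bz zy] /=.
case: (eqVneq z y) => [->|zy'].
  by rewrite phi_lim //; exists l.
have zlt : z < y by rewrite lt_neqAle zy' zy.
have lz : l < z := le_lt_trans lb bz.
have nlz : ~ lim z by apply: lH.
have H' : forall w, l < w -> w < z -> ~ lim w by move=> w lw wz; apply: lH => //; apply: lt_trans zlt.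
have Szl : S z l by split => //; split => //; apply: ltW.
have sz : sigma z = l := sigma_eq ll lz H'.
rewrite phi_block //; last by exists l.
exists z0; split; last by apply: aU => //; apply: ltW.
right; rewrite /q sz /=.
have [_ PH] := PPP (cl l z).+1 ll lt.
by apply: PH => //; rewrite ltnS; apply: bH.
Qed.

Lemma lsc_phi : Defs.lower_semicontinuous phi.
Proof.
move=> U oU; apply: open_of_local => y [u [phiyu Uu]].
have [ly|ly] := pselect (lim y); last first.
  exists [set y]; split => //; first exact: iso_open.
  by move=> z /= ->; exists u.
case: (eqVneq y top) => [yt|yt].
  move: phiyu; rewrite yt phi_top => /= ut; rewrite ut in Uu.
  by rewrite -yt in Uu *; apply: lsc_self => //; left.
move: phiyu; rewrite phi_lim // => /= ut; rewrite ut in Uu.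
have Syy : S y y by split => //; split => // v wv vw; move: (lt_trans wv vw); rewrite ltxx.
have [[_ [sy _]] _] := sigmaP (ex_intro _ y Syy).
move: sy; rewrite le_eqVlt => /orP[/eqP sy|sy].
  by apply: lsc_self => //; [rewrite -sy|right].
exact: lsc_block.
Qed.

Lemma no_selection : ~ self_selective T.
Proof.
move=> H.
have [f [fc fsel]] := H phi (fun x => conj (@phi_ne x) (@phi_closed x)) lsc_phi.
have ftop : f top = top by have := fsel top; rewrite phi_top.
have G : forall b, b < top -> exists g, g < top /\ forall a, g < a -> b < f a.
  move=> b bt.
  have nb : nbhs top (f @^-1` [set z | b < z]).
    apply: (fc top); rewrite ftop; apply: open_nbhs_nbhs; split => //; exact: open_gt.
  have [g [gt gH]] := nbhs_left nb bt.
  by exists g; split => // a ga; apply: gH a ga (topmax a).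
pose Gf b := xget top [set g | g < top /\ forall a, g < a -> b < f a].
have GfP : forall b, b < top -> Gf b < top /\ forall a, Gf b < a -> b < f a.
  by move=> b bt; apply: (@xgetPex _ top [set g | g < top /\ forall a, g < a -> b < f a]); apply: G.
have [[a0 a0t] _] := top_lim.
pose s n := iter n (fun u => nx (Order.max u (Gf u))) a0.
have st : forall n, s n < top.
  elim=> [|n IH] //; rewrite /s iterS -/(s n).
  have hm : Order.max (s n) (Gf (s n)) < top by rewrite gt_max IH (GfP _ IH).1.
  by case: (nxP hm).
have sS : forall n, Order.max (s n) (Gf (s n)) < s n.+1.
  move=> n; rewrite /s iterS -/(s n).
  have hm : Order.max (s n) (Gf (s n)) < top by rewrite gt_max st (GfP _ (st n)).1.
  by case: (nxP hm).
have sinc : forall n, s n < s n.+1.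
  by move=> n; move: (sS n); rewrite gt_max => /andP[].
have [l [lt ll sl below]] := sup_seq sinc st.
have H1 : forall a, l < a -> l <= f a.
  move=> a la; rewrite leNgt; apply/negP => fal.
  have [n fn] := below _ fal.
  have ga : Gf (s n) < a.
    move: (sS n); rewrite gt_max => /andP[_ h]; apply: lt_trans h _.
    exact: lt_trans (sl n.+1) la.
  have := (GfP (s n) (st n)).2 a ga.
  by rewrite ltNge (ltW fn).
have [lny lyl lyt lH] := nuP lt.
set y := nu l in lny lyl lyt lH.
have sy : sigma y = l := sigma_eq ll lny lH.
have fy : f y = l.
  by have := fsel y; rewrite phi_lim ?sy ?lt_eqF.
have nb : nbhs y (f @^-1` [set z | z <= l]).
  apply: (fc y); rewrite fy; apply: open_nbhs_nbhs; split.
    by have := open_le l.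
  by rewrite /=.
have [a [ay aH]] := nbhs_left nb lny.
have hml : Order.max a l < y by rewrite gt_max ay lny.
have [w [mw wy]] := lyl.2 (Order.max a l) hml.
move: mw; rewrite gt_max => /andP[aw lw].
have fwl : f w <= l := aH w aw (ltW wy).
have lfw : l <= f w := H1 w lw.
have fw : f w = l by apply/eqP; rewrite eq_le fwl lfw.
have nlw : ~ lim w := lH w lw wy.
have H' : forall v, l < v -> v < w -> ~ lim v.
  by move=> v lv vw; apply: lH => //; apply: lt_trans wy.
have sw : sigma w = l := sigma_eq ll lw H'.
have Swl : S w l by split => //; split => //; apply: ltW.
have := fsel w; rewrite phi_block //; last by exists l.
rewrite fw => -[wl|].
  by move: lw; rewrite wl ltxx.
rewrite /= /q sw; have [Pl _] := PPP (cl l w).+1 ll lt.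
by move=> le; move: (le_lt_trans le Pl); rewrite ltxx.
Qed.

End Main.

Theorem mainTheorem7 (d : Order.disp_t) (T : orderTopologicalType d) :
  is_omega1_plus_1 T -> ~ self_selective T.
Proof.
move=> [wo [top [tm [unc cnt]]]].
exact: (@no_selection d T top wo tm unc cnt).
Qed.
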